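(* Let $N_f \ge 1$ be an integer, $\beta>0$, $\lambda>0$ and $r_c>0$. Let $p_r(i)=i^{-\beta}/\sum_{k=1}^{N_f}k^{-\beta}$ for $i=1,\dots,N_f$. Consider the optimization problem \[ \max_{p_c(1),\dots,p_c(N_f)} \ \sum_{i=1}^{N_f}p_r(i)\left(1-e^{-\lambda p_c(i)\pi r_c^2}\right)\quad \text{s.t.}\quad \sum_{i=1}^{N_f}p_c(i)=1,\ \ p_c(i)\ge 0,\ i=1,\dots,N_f, \] and denote its optimal solution by $p_c^*(i)$, $i=1,\dots,N_f$. If $\frac{N_f^{N_f}}{N_f!} < e^{\frac{\lambda\pi r_c^2}{\beta}}$, then \[ p_c^*(i)=\frac{\beta}{\lambda\pi r_c^2 N_f}\sum_{j=1}^{N_f}\ln\Big(\frac{j}{i}\Big)+\frac{1}{N_f},\qquad i=1,\dots,N_f. \] Otherwise, \[ p_c^*(i)=\begin{cases}\frac{\beta}{\lambda\pi r_c^2 i^*}\sum_{j=1}^{i^*}\ln\Big(\frac{j}{i}\Big)+\frac{1}{i^*}, & i\le i^*,\\ 0, & i^*<i\le N_f,\end{cases} \] where the integer $i^*$ satisfies $\frac{(i^*+1)^{i^*}}{i^*!}\ge e^{\frac{\lambda\pi r_c^2}{\beta}}$, $\frac{(i^* )^{i^*}}{i^*!}< e^{\frac{\lambda\pi r_c^2}{\beta}}$, and $\frac{\lambda\pi r_c^2}{\beta}-1\le i^*\le \frac{\lambda\pi r_c^2}{\beta}+\ln(\sqrt{2\pi N_f})+1$.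
   Context: Interpretation: users form a Poisson point process of density $\lambda$; $p_r(i)$ (Zipf distribution with parameter $\beta$) is the probability a user requests file $i$ out of $N_f$ files; $p_c(i)$ is the probability a user caches file $i$; $r_c$ is the collaboration distance; the objective is the offloading ratio. *)

(* Defs.v *)
From mathcomp Require Import all_boot all_order all_algebra.
From mathcomp Require Import all_classical all_reals all_analysis.
Set Implicit Arguments. Unset Strict Implicit. Unset Printing Implicit Defensive.
Import Order.TTheory GRing.Theory Num.Theory.
Local Open Scope ring_scope.

(* Files are indexed by i = 1, ..., Nf; a caching distribution is a function
   nat -> R of which only the values at 1..Nf matter. *)

Definition pr {R : realType} (Nf : nat) (beta : R) (i : nat) : R :=
  (i%:R `^ (- beta)) / \sum_(1 <= k < Nf.+1) (k%:R `^ (- beta)).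

Definition offloading {R : realType} (Nf : nat) (beta lam rc : R)
    (pc : nat -> R) : R :=
  \sum_(1 <= i < Nf.+1)
     pr Nf beta i * (1 - expR (- (lam * pc i * pi * rc ^+ 2))).

Definition feasible {R : realType} (Nf : nat) (pc : nat -> R) : Prop :=
  \sum_(1 <= i < Nf.+1) pc i = 1 /\ (forall i, (1 <= i <= Nf)%N -> 0 <= pc i).

Definition is_optimal {R : realType} (Nf : nat) (beta lam rc : R)
    (pc : nat -> R) : Prop :=
  feasible Nf pc /\
  (forall q : nat -> R, feasible Nf q ->
     offloading Nf beta lam rc q <= offloading Nf beta lam rc pc).

(* "p_c^* is the optimal solution": it is optimal and every optimal solution
   coincides with it on the indices 1..Nf. *)
Definition is_the_optimal_solution {R : realType} (Nf : nat) (beta lam rc : R)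
    (pstar : nat -> R) : Prop :=
  is_optimal Nf beta lam rc pstar /\
  (forall pc, is_optimal Nf beta lam rc pc ->
     forall i, (1 <= i <= Nf)%N -> pc i = pstar i).

(* Main.v *)
Require Import Defs.
From mathcomp Require Import all_boot all_order all_algebra.
From mathcomp Require Import all_classical all_reals all_analysis.
From mathcomp Require Import ring lra zify.
Import Order.TTheory GRing.Theory Num.Theory.
Local Open Scope ring_scope.

Lemma chi_ge0 (R : realType) (t : R) : 0 <= t -> 0 <= (2 + t) - (2 - t) * expR t.
Proof.
move=> t0.
pose chi := (cst 2 + id) - ((cst 2 - id) * (@expR R)).
have D x : is_derive x (1:R) chi (1 - ((2 - x) * expR x - expR x)).
  rewrite /chi.
  apply: is_derive_eq.
  rewrite /= /cst. rewrite -![_ *: _]/(_ * _). rewrite (_ : ((fun=> (2:R)) - id) x = 2 - x) //. ring.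
have dpos x : 0 <= x -> 0 <= derive1 chi x.
  move=> x0; rewrite derive1E (@derive_val _ _ _ _ _ _ _ (D x)).
  have := expR_ge1Dx (- x); rewrite expRN => h.
  have ex := expR_gt0 x.
  rewrite -subr_ge0 in h.
  have : 0 <= (expR x)^-1 - (1 - x) by lra.
  move=> h2.
  have : 0 <= ((expR x)^-1 - (1 - x)) * expR x by apply: mulr_ge0 => //; lra.
  rewrite mulrBl mulVf ?gt_eqF //.
  move=> h3; lra.
have key : chi 0 <= chi t.
  apply: (@ger0_derive1_ndecry R chi 0) => //.
  - by move=> x; rewrite in_itv /= andbT => /ltW; apply: dpos.
  - by apply: derivable_within_continuous => x _.
have c0 : chi 0 = 2 + 0 - (2 - 0) * expR 0 by [].
have ct : chi t = 2 + t - (2 - t) * expR t by [].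
by move: key; rewrite c0 ct expR0; lra.
Qed.

Lemma exp2_le (R : realType) (k : nat) : (0 < k)%N ->
  expR 2 * k%:R ^+ (2*k).+1 <= (k.+1)%:R ^+ (2*k).+1 :> R.
Proof.
move=> k0.
have hn : ((2*k).+1)%:R = 2 * k%:R + 1 :> R by rewrite -addn1 natrD natrM.
have kpos : 0 < k%:R :> R by rewrite ltr0n.
pose t : R := 2 / ((2*k).+1)%:R.
have ht : t * (2 * k%:R + 1) = 2.
  by rewrite /t hn mulrAC -mulrA mulfV ?mulr1 //; apply/negP => /eqP; lra.
have t0 : 0 <= t by rewrite /t divr_ge0 // ler0n.
have h := @chi_ge0 R t t0.
have ht2 : t * (2 * k%:R + 1) * expR t = 2 * expR t by rewrite ht.
have hm := mulr_ge0 (_ : 0 <= 2 * k%:R + 1) h.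
have key : expR t * k%:R <= k.+1%:R.
  rewrite -addn1 natrD; move: hm; rewrite -/(2 * k%:R + 1) => /(_ ltac:(lra)).
  nra.
have -> : expR 2 = expR t ^+ (2*k).+1 by rewrite -expRM_natr hn ht.
rewrite -exprMn; apply: lerXn2r => //; rewrite nnegrE.
- by apply: mulr_ge0; [exact: expR_ge0 | exact: ler0n].
- exact: ler0n.
Qed.

Lemma stirling (R : realType) (k : nat) : (0 < k)%N ->
  expR (2 * (k%:R - 1)) * ((k`!)%:R ^+ 2) <= k%:R * (k%:R ^+ k) ^+ 2 :> R.
Proof.
elim: k => // k IH _.
case: k IH => [_|k IH].
  by rewrite /= expr1n !mul1r subrr mulr0 expR0 mulr1.
have IH' := IH isT.
set K : R := (k.+1)%:R.
have hK : (k.+2)%:R = K + 1 :> R by rewrite /K -addn1 natrD.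
set A := expR (2 * (K - 1)).
set X : R := ((k.+1)`!)%:R.
rewrite factS natrM -/X hK.
have e : expR (2 * (K + 1 - 1)) = expR 2 * A by rewrite /A -expRD; congr expR; ring.
have r : (K + 1) * ((K + 1) ^+ k.+2) ^+ 2 = (K + 1) ^+ 2 * (K + 1) ^+ (2 * k.+1).+1.
  rewrite -exprM -exprS -exprD; congr (_ ^+ _); lia.
rewrite e r.
have IH2 : A * X ^+ 2 <= K ^+ (2 * k.+1).+1.
  by move: IH'; rewrite -/K -/A -/X -exprM mulrC -exprS mulnC.
have E2 := @exp2_le R k.+1 isT; rewrite -/K -hK in E2 *.
have -> : expR 2 * A * ((k.+2)%:R * X) ^+ 2 = (k.+2)%:R ^+ 2 * (expR 2 * (A * X ^+ 2)).
  by rewrite exprMn; ring.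
apply: ler_wpM2l; first exact: exprn_ge0 (ler0n _ _).
apply: le_trans E2.
by apply: ler_wpM2l => //; exact: expR_ge0.
Qed.

Lemma Gbound (R : realType) (k : nat) : (k.+1)%:R ^+ k <= expR k%:R * (k`!)%:R :> R.
Proof.
elim: k => [|k IH]; first by rewrite expr0 expR0 mul1r.
set K : R := (k.+1)%:R.
have Kpos : 0 < K by rewrite ltr0n.
have hK : (k.+2)%:R = K + 1 :> R by rewrite /K -addn1 natrD.
have h1 : K + 1 <= expR K^-1 * K.
  have := expR_ge1Dx K^-1.
  move=> h; have := ler_wpM2r (ltW Kpos) h.
  by rewrite mulrDl mul1r mulVf ?gt_eqF // addrC.
have h2 : (K + 1) ^+ k.+1 <= expR 1 * K ^+ k.+1.
  have -> : expR 1 = expR K^-1 ^+ k.+1 :> R.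
    by rewrite -expRM_natr -/K mulVf ?gt_eqF.
  rewrite -exprMn; apply: lerXn2r => //; rewrite nnegrE.
  - lra.
  - by apply: mulr_ge0; [exact: expR_ge0 | lra].
rewrite hK factS natrM -/K.
apply: (le_trans h2).
rewrite exprS.
have -> : expR K * (K * (k`!)%:R) = expR 1 * (K * (expR k%:R * (k`!)%:R)).
  rewrite /K -addn1 natrD expRD; ring.
apply: ler_wpM2l; first exact: expR_ge0.
by apply: ler_wpM2l; [lra | exact: IH].
Qed.

Lemma lnfact (R : realType) (k : nat) : ln ((k`!)%:R : R) = \sum_(1 <= j < k.+1) ln (j%:R : R).
Proof.
elim: k => [|k IH]; first by rewrite big_geq // ln1.
rewrite big_nat_recr //= -IH factS natrM lnM ?posrE ?ltr0n ?fact_gt0 //.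
by rewrite addrC.
Qed.

Lemma FG (R : realType) (k : nat) : (k.+1)%:R ^+ k.+1 / ((k.+1)`!)%:R = (k.+1)%:R ^+ k / (k`!)%:R :> R.
Proof.
rewrite factS natrM exprS invfM mulrACA mulfV ?mul1r // pnatr_eq0 //.
Qed.


Definition pk {R : realType} (k : nat) (beta lam rc : R) (i : nat) : R :=
  if (i <= k)%N then
    beta / (lam * pi * rc ^+ 2 * k%:R)
      * (\sum_(1 <= j < k.+1) ln (j%:R / i%:R)) + k%:R^-1
  else 0.

Lemma opt_k (R : realType) (Nf k : nat) (beta lam rc : R) :
  0 < beta -> 0 < lam -> 0 < rc -> (1 <= k <= Nf)%N ->
  k%:R ^+ k / (k`!)%:R < expR (lam * pi * rc ^+ 2 / beta) ->
  ((k < Nf)%N -> expR (lam * pi * rc ^+ 2 / beta) <= (k.+1)%:R ^+ k / (k`!)%:R) ->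
  is_the_optimal_solution Nf beta lam rc (pk k beta lam rc).
Proof.
move=> b0 l0 r0 /andP[k1 kN] HF HG.
set a := lam * pi * rc ^+ 2.
have a0 : 0 < a by rewrite /a !mulr_gt0 ?exprn_gt0 ?pi_gt0.
set L := \sum_(1 <= j < k.+1) ln (j%:R : R).
have kpos : 0 < k%:R :> R by rewrite ltr0n.
set c := (beta * L + a) / (a * k%:R).
set p := pk k beta lam rc.
have E1 : forall i, (1 <= i <= k)%N -> p i = c - beta / a * ln i%:R.
  move=> i /andP[i1 ik]; rewrite /p /pk ik -/a.
  have -> : \sum_(1 <= j < k.+1) ln (j%:R / i%:R) = L - k%:R * ln (i%:R : R).
    rewrite (eq_big_nat _ _ (F2 := fun j => ln (j%:R : R) - ln i%:R)); last first.
      by move=> j /andP[j1 _]; rewrite ln_div // posrE ltr0n.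
    by rewrite sumrB sumr_const_nat subn1 /= mulr_natl.
  by rewrite /c; field; rewrite !gt_eqF.
have E0 : forall i, (k < i)%N -> p i = 0.
  by move=> i ki; rewrite /p /pk leqNgt ki.
have HL : ln (k%:R ^+ k / (k`!)%:R) = k%:R * ln (k%:R : R) - L.
  rewrite ln_div ?posrE ?exprn_gt0 ?ltr0n ?fact_gt0 // lnXn // lnfact.
  by rewrite mulr_natl.
have HF' : k%:R * ln (k%:R : R) - L < a / beta.
  rewrite -HL -(expRK (a / beta)) ltr_ln ?posrE ?expR_gt0 //.
  by rewrite divr_gt0 ?exprn_gt0 ?ltr0n ?fact_gt0.
have Hpk : 0 < c - beta / a * ln (k%:R : R).
  have h1 : beta * (k%:R * ln (k%:R : R) - L) < a.
    by move: HF'; rewrite ltr_pdivlMr // mulrC.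
  have -> : c - beta / a * ln (k%:R : R)
      = (a - beta * (k%:R * ln (k%:R : R) - L)) / (a * k%:R).
    by rewrite /c; field; rewrite !gt_eqF.
  by apply: divr_gt0; [rewrite subr_gt0 | rewrite mulr_gt0].
have Ppos : forall i, (1 <= i <= k)%N -> 0 < p i.
  move=> i /andP[i1 ik]; rewrite E1 ?i1 //.
  apply: (lt_le_trans Hpk); rewrite lerD2l lerN2.
  apply: ler_wpM2l; first by rewrite divr_ge0 // ltW.
  by rewrite ler_ln ?posrE ?ltr0n // ler_nat.
have Sum : \sum_(1 <= i < Nf.+1) p i = 1.
  rewrite (big_cat_nat (n := k.+1)) //= [X in _ + X]big1_seq ?addr0; last first.
    move=> i /andP[_]; rewrite mem_index_iota => /andP[ki _]; exact: E0.
  rewrite (eq_big_nat _ _ (F2 := fun i => c - beta / a * ln (i%:R : R))) //.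
  rewrite sumrB sumr_const_nat -mulr_sumr subn1 /= -/L -mulr_natl /c.
  by field; rewrite !gt_eqF.
have feas : feasible Nf p.
  split => // i /andP[i1 iN]; case: (leqP i k) => ik.
    by apply: ltW; apply: Ppos; rewrite i1.
  by rewrite E0.
set Z := \sum_(1 <= j < Nf.+1) (j%:R : R) `^ (- beta).
have hZ : 0 < Z.
  rewrite /Z big_ltn; last by rewrite ltnS (leq_trans k1 kN).
  have h1 : 0 < (1%:R : R) `^ (- beta) by apply: powR_gt0; rewrite ltr0n.
  have h2 : 0 <= \sum_(2 <= i < Nf.+1) (i%:R : R) `^ (- beta).
    by apply: sumr_ge0 => j _; apply: powR_ge0.
  lra.
have prE : forall i, (1 <= i)%N -> pr Nf beta i = expR (- beta * ln (i%:R : R)) / Z.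
  by move=> i i1; rewrite /pr -/Z /powR pnatr_eq0 eqn0Ngt i1.
have pr_ge0 : forall i, 0 <= pr Nf beta i.
  by move=> i; rewrite /pr -/Z; apply: divr_ge0 (powR_ge0 _ _) (ltW hZ).
have pr_gt0 : forall i, (1 <= i)%N -> 0 < pr Nf beta i.
  by move=> i i1; rewrite prE // divr_gt0 // expR_gt0.
set g := fun i => pr Nf beta i * a * expR (- (a * p i)).
set mu := a * expR (- (a * c)) / Z.
have Hg_eq : forall i, (1 <= i <= k)%N -> g i = mu.
  move=> i /andP[i1 ik]; rewrite /g /mu prE // E1 ?i1 //.
  have h : expR (- beta * ln (i%:R : R)) * expR (- (a * (c - beta / a * ln (i%:R : R))))
      = expR (- (a * c)).
    by rewrite -expRD; congr expR; field; rewrite gt_eqF.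
  by rewrite -h; field; rewrite gt_eqF.
have Hg_le : forall i, (1 <= i <= Nf)%N -> g i <= mu.
  move=> i /andP[i1 iN]; case: (leqP i k) => ik; first by rewrite Hg_eq ?i1.
  have HG' := HG (leq_trans ik iN).
  have hG : a / beta <= k%:R * ln ((k.+1)%:R : R) - L.
    have Gpos : 0 < (k.+1)%:R ^+ k / (k`!)%:R :> R.
      by rewrite divr_gt0 ?exprn_gt0 ?ltr0n ?fact_gt0.
    move: HG'; rewrite -ler_ln ?posrE ?expR_gt0 // expRK.
    rewrite ln_div ?posrE ?exprn_gt0 ?ltr0n ?fact_gt0 // lnXn // lnfact.
    by rewrite mulr_natl.
  have hi : ln ((k.+1)%:R : R) <= ln (i%:R : R).
    by rewrite ler_ln ?posrE ?ltr0n ?ler_nat // (leq_trans _ ik).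
  have h1 : a <= beta * (k%:R * ln ((k.+1)%:R : R) - L).
    by move: hG; rewrite ler_pdivrMr // mulrC.
  have h2 : beta * (k%:R * ln ((k.+1)%:R : R)) <= beta * (k%:R * ln (i%:R : R)).
    by apply: ler_wpM2l; [exact: ltW | apply: ler_wpM2l; [exact: ltW |]].
  have hac : a * c <= beta * ln (i%:R : R).
    have -> : a * c = (beta * L + a) / k%:R by rewrite /c; field; rewrite !gt_eqF.
    rewrite ler_pdivrMr //; lra.
  have i1' : (1 <= i)%N by apply: leq_trans ik; rewrite ltnS.
  rewrite /g E0 // mulr0 oppr0 expR0 mulr1 prE //.
  have he : expR (- beta * ln (i%:R : R)) <= expR (- (a * c)).
    by rewrite ler_expR; lra.
  have -> : expR (- beta * ln (i%:R : R)) / Z * a = (a * expR (- beta * ln (i%:R : R))) / Z.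
    by field; rewrite gt_eqF.
  rewrite /mu ler_pM2r ?invr_gt0 // ler_pM2l //.
set Dt := fun x y : R => expR (- (a * y)) - expR (- (a * x)) + a * expR (- (a * x)) * (y - x).
have DtE : forall x y, Dt x y = expR (- (a * x)) * (expR (- (a * (y - x))) - (1 + - (a * (y - x)))).
  move=> x y; rewrite /Dt.
  have -> : expR (- (a * y)) = expR (- (a * x)) * expR (- (a * (y - x))).
    by rewrite -expRD; congr expR; ring.
  ring.
have Dt_ge0 : forall x y, 0 <= Dt x y.
  move=> x y; rewrite DtE; apply: mulr_ge0; first exact: expR_ge0.
  by rewrite subr_ge0 expR_ge1Dx.
have Dt_eq0 : forall x y, Dt x y = 0 -> y = x.
  move=> x y; case: (eqVneq y x) => // hne; rewrite DtE => h0; exfalso.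
  have u0 : - (a * (y - x)) != 0.
    by rewrite oppr_eq0 mulf_neq0 ?subr_eq0 // gt_eqF.
  have := expR_gt1Dx u0; rewrite -subr_gt0 => /(mulr_gt0 (expR_gt0 (- (a * x)))).
  by rewrite h0 ltxx.
have offE : forall q, offloading Nf beta lam rc q
    = \sum_(1 <= i < Nf.+1) pr Nf beta i * (1 - expR (- (a * q i))).
  by move=> q; rewrite /offloading; apply: eq_bigr => i _; rewrite /a; congr (_ * (1 - expR (- _))); ring.
have Hid : forall q, offloading Nf beta lam rc q = offloading Nf beta lam rc p
    + (\sum_(1 <= i < Nf.+1) g i * q i - \sum_(1 <= i < Nf.+1) g i * p i)
    - \sum_(1 <= i < Nf.+1) pr Nf beta i * Dt (p i) (q i).
  move=> q.
  have T : forall i, pr Nf beta i * (1 - expR (- (a * q i))) = pr Nf beta i * (1 - expR (- (a * p i)))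
      + (g i * q i - g i * p i) - pr Nf beta i * Dt (p i) (q i).
    by move=> i; rewrite /g /Dt; ring.
  by rewrite !offE (eq_bigr _ (fun i _ => T i)) !big_split /= !sumrN.
have Sgp : \sum_(1 <= i < Nf.+1) g i * p i = mu.
  rewrite (eq_big_nat _ _ (F2 := fun i => mu * p i)); first by rewrite -mulr_sumr Sum mulr1.
  move=> i /andP[i1 iN]; case: (leqP i k) => ik; first by rewrite Hg_eq ?i1.
  by rewrite E0 // !mulr0.
have Sgq : forall q, feasible Nf q -> \sum_(1 <= i < Nf.+1) g i * q i <= mu.
  move=> q [Sq qge0].
  rewrite -[mu]mulr1 -Sq mulr_sumr; apply: ler_sum_nat => i /andP[i1 iN].
  apply: ler_wpM2r.
    by apply: qge0; rewrite i1 -ltnS.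
  by apply: Hg_le; rewrite i1 -ltnS.
have opt : is_optimal Nf beta lam rc p.
  split => // q fq; rewrite (Hid q).
  have := Sgq q fq; rewrite -Sgp => h.
  have SD : 0 <= \sum_(1 <= i < Nf.+1) pr Nf beta i * Dt (p i) (q i).
    by apply: sumr_ge0 => i _; apply: mulr_ge0.
  lra.
split => // q [fq oq] i /andP[i1 iN].
have := oq p feas; rewrite (Hid q) => h.
have := Sgq q fq; rewrite -Sgp => h'.
have SD0 : \sum_(1 <= i < Nf.+1) pr Nf beta i * Dt (p i) (q i) == 0.
  rewrite eq_le; apply/andP; split; first lra.
  by apply: sumr_ge0 => j _; apply: mulr_ge0.
move: SD0; rewrite psumr_eq0; last by move=> j _; apply: mulr_ge0.
move=> /allP /(_ i); rewrite mem_index_iota i1 ltnS iN => /(_ isT) /=.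
rewrite mulf_eq0 gt_eqF ?pr_gt0 //= => /eqP; exact: Dt_eq0.
Qed.

Lemma transfer (R : realType) (Nf : nat) (beta lam rc : R) (p p' : nat -> R) :
  (forall i, (1 <= i <= Nf)%N -> p i = p' i) ->
  is_the_optimal_solution Nf beta lam rc p ->
  is_the_optimal_solution Nf beta lam rc p'.
Proof.
move=> e [[[Sp pge0] op] up].
have eS : forall F : R -> R, \sum_(1 <= i < Nf.+1) F (p i) = \sum_(1 <= i < Nf.+1) F (p' i).
  by move=> F; apply: eq_big_nat => i /andP[i1 iN]; rewrite e // i1 -ltnS.
have fp' : feasible Nf p'.
  split; first by rewrite -Sp (eS id).
  by move=> i hi; rewrite -e //; apply: pge0.
have off : offloading Nf beta lam rc p = offloading Nf beta lam rc p'.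
  by apply: eq_big_nat => i /andP[i1 iN]; rewrite e // i1 -ltnS.
split.
  split => //.
  by move=> q fq; rewrite -off; apply: op.
move=> pc opc i hi; rewrite -e //; apply: up => //.
Qed.

Lemma exists_k (R : realType) (E : R) (n : nat) : (1 <= n)%N ->
  1%:R ^+ 1 / (1`!)%:R < E -> E <= n%:R ^+ n / (n`!)%:R ->
  exists k, [/\ (1 <= k < n)%N, k%:R ^+ k / (k`!)%:R < E &
             E <= (k.+1)%:R ^+ k / (k`!)%:R].
Proof.
elim: n => // n IH _ F1 Fn.
case: n IH Fn => [|n] IH Fn; first by move: F1; rewrite ltNge Fn.
case: (ltP (n.+1%:R ^+ n.+1 / (n.+1`!)%:R) E) => h.
  exists n.+1; split => //.
  - lia.
  - by move: Fn; rewrite (@FG R n.+1).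
have [k [kr kF kG]] := IH isT F1 h.
exists k; split => //.
by case/andP: kr => -> /= /ltnW; rewrite ltnS.
Qed.

Theorem proposition1 (R : realType) (Nf : nat) (beta lam rc : R) :
  (1 <= Nf)%N -> 0 < beta -> 0 < lam -> 0 < rc ->
  (((Nf%:R ^+ Nf) / (Nf`!)%:R < expR (lam * pi * rc ^+ 2 / beta)) ->
     is_the_optimal_solution Nf beta lam rc
       (fun i : nat =>
          beta / (lam * pi * rc ^+ 2 * Nf%:R)
            * (\sum_(1 <= j < Nf.+1) ln (j%:R / i%:R)) + Nf%:R^-1))
  /\
  (~ ((Nf%:R ^+ Nf) / (Nf`!)%:R < expR (lam * pi * rc ^+ 2 / beta)) ->
     exists istar : nat,
       [/\ (1 <= istar <= Nf)%N,
           expR (lam * pi * rc ^+ 2 / beta)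
             <= ((istar.+1)%:R ^+ istar) / (istar`!)%:R,
           (istar%:R ^+ istar) / (istar`!)%:R
             < expR (lam * pi * rc ^+ 2 / beta),
           lam * pi * rc ^+ 2 / beta - 1 <= istar%:R /\
           istar%:R <= lam * pi * rc ^+ 2 / beta
                       + ln (Num.sqrt (2 * pi * Nf%:R)) + 1 &
           is_the_optimal_solution Nf beta lam rc
             (fun i : nat =>
                if (i <= istar)%N then
                  beta / (lam * pi * rc ^+ 2 * istar%:R)
                    * (\sum_(1 <= j < istar.+1) ln (j%:R / i%:R))
                  + istar%:R^-1
                else 0)]).
Proof.
move=> N1 b0 l0 r0; split.
  move=> HF; apply: (@transfer _ _ _ _ _ (pk Nf beta lam rc)).
    by move=> i /andP[_ iN]; rewrite /pk iN.
  apply: opt_k => //; first by rewrite N1 leqnn.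
  by rewrite ltnn.
move=> nHF.
set x := lam * pi * rc ^+ 2 / beta.
have x0 : 0 < x by rewrite /x !mulr_gt0 ?invr_gt0 ?exprn_gt0 ?pi_gt0.
have HE : expR x <= Nf%:R ^+ Nf / (Nf`!)%:R by rewrite leNgt; apply/negP.
have F1 : 1%:R ^+ 1 / (1`!)%:R < expR x.
  by rewrite expr1 /= divr1 expR_gt1.
have [k [/andP[k1 kN] kF kG]] := @exists_k R _ Nf N1 F1 HE.
have kpos : 0 < k%:R :> R by rewrite ltr0n.
have fpos : 0 < (k`!)%:R :> R by rewrite ltr0n fact_gt0.
exists k; split => //.
- by rewrite k1 ltnW.
- split.
  + have := Gbound R k; rewrite -ler_pdivrMr // => hG.
    have : expR x <= expR k%:R by apply: (le_trans kG hG).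
    rewrite ler_expR => hk.
    lra.
  + have St := @stirling R k k1.
    set u := k%:R ^+ k in kF St; set v := (k`!)%:R in kF St fpos.
    have hu : u < expR x * v by move: kF; rewrite ltr_pdivrMr.
    have u0 : 0 <= u by rewrite /u exprn_ge0 // ltW.
    have ex0 := expR_gt0 x.
    have hu2 : u ^+ 2 < (expR x * v) ^+ 2.
      rewrite !expr2; nra.
    have h3 : expR (2 * (k%:R - 1)) * v ^+ 2 < (k%:R * expR x ^+ 2) * v ^+ 2.
      apply: (le_lt_trans St).
      have -> : k%:R * expR x ^+ 2 * v ^+ 2 = k%:R * (expR x * v) ^+ 2.
        by rewrite exprMn !mulrA.
      by rewrite ltr_pM2l.
    have h4 : expR (2 * (k%:R - 1)) < k%:R * expR x ^+ 2.
      by move: h3; rewrite ltr_pM2r // exprn_gt0.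
    have h5 : k%:R * expR x ^+ 2 = expR (ln k%:R + 2 * x).
      by rewrite expRD lnK ?posrE // expRM_natl.
    have h6 : 2 * (k%:R - 1) < ln (k%:R : R) + 2 * x by rewrite -ltr_expR -h5.
    have s0 : 0 < 2 * pi * Nf%:R :> R.
      by rewrite !mulr_gt0 ?pi_gt0 // ltr0n.
    have hs : ln (2 * pi * Nf%:R) = 2 * ln (Num.sqrt (2 * pi * Nf%:R) : R).
      rewrite -{1}(sqr_sqrtr (ltW s0)) lnXn ?sqrtr_gt0 //.
      by rewrite mulr2n; ring.
    have hkN : k%:R <= 2 * pi * Nf%:R :> R.
      have := pi_ge2 R; have : k%:R <= Nf%:R :> R by rewrite ler_nat ltnW.
      move=> h1 h2; nra.
    have hl : ln (k%:R : R) <= ln (2 * pi * Nf%:R).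
      by rewrite ler_ln ?posrE.
    lra.
- have kk : (1 <= k <= Nf)%N by rewrite k1 ltnW.
  exact: (@opt_k R Nf k beta lam rc b0 l0 r0 kk kF (fun _ => kG)).
Qed.
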